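(* Let $(B,\cdot)$ and $(C,\diamond)$ be invariant sets (possibly equal), let $B_1$ be a finitely supported subset of $B$ and $C_1$ a finitely supported subset of $C$. If there exist a finitely supported injective map $f:B_1\to C_1$ and a finitely supported injective map $g:C_1\to B_1$, then there exists a finitely supported bijection $h:B_1\to C_1$, and moreover $supp(h)\subseteq supp(f)\cup supp(g)\cup supp(B_1)\cup supp(C_1)$.
   Context: Framework (FSM). Work in ZF with a fixed infinite set $A$ whose elements are called atoms. $S_A$ is the group of all bijections $\pi:A\to A$ fixing all but finitely many atoms. An $S_A$-set is a set with a group action of $S_A$. For $S\subseteq A$, $Fix(S)=\{\pi\in S_A:\pi(a)=a\ \forall a\in S\}$; $S$ supports $x$ if $\pi\cdot x=x$ for all $\pi\in Fix(S)$. An invariant set is an $S_A$-set in which every element is supported by some finite set; $supp(x)$ denotes the least finite set supporting $x$; $x$ is equivariant if $supp(x)=\emptyset$. The powerset carries the action $\pi\star Z=\{\pi\cdot z:z\in Z\}$; a subset is finitely supported if it has a finite support under this action. Products carry $\pi\cdot(x,y)=(\pi\cdot x,\pi\cdot y)$. A function $f:X\to Y$ between finitely supported subsets of invariant sets is finitely supported if its graph is a finitely supported subset of the product; equivalently, there is a finite $S\subseteq A$ such that for all $\pi\in Fix(S)$ and $x\in X$: $\pi\cdot x\in X$, $\pi\cdot f(x)\in Y$ and $f(\pi\cdot x)=\pi\cdot f(x)$; $supp(f)$ is the least such $S$. *)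

(* Defs.v *)
From Stdlib Require Import List.
Import ListNotations.
Set Implicit Arguments.


Record fperm (A : Type) := FPerm {
  pf : A -> A;
  pinv : A -> A;
  pf_pinv : forall a, pf (pinv a) = a;
  pinv_pf : forall a, pinv (pf a) = a;
  pdom : list A;
  pdom_spec : forall a, pf a <> a -> In a pdom
}.

Definition fixes (A : Type) (pi : fperm A) (S : list A) : Prop :=
  forall a, In a S -> pf pi a = a.

Definition supports (A X : Type) (act : fperm A -> X -> X) (S : list A) (x : X)
  : Prop := forall pi, fixes pi S -> act pi x = x.

(* Invariant sets: S_A-sets (group actions, identified through the
   underlying permutation function) whose elements are all finitely supported. *)
Record invset (A : Type) := InvSet {
  carrier :> Type;
  act : fperm A -> carrier -> carrier;
  act_id : forall pi x, (forall a, pf pi a = a) -> act pi x = x;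
  act_comp : forall pi sigma rho x,
      (forall a, pf rho a = pf pi (pf sigma a)) ->
      act rho x = act pi (act sigma x);
  act_fs : forall x : carrier, exists S : list A, supports act S x
}.

Definition set_supports (A : Type) (X : invset A) (S : list A) (Z : X -> Prop)
  : Prop :=
  forall pi, fixes pi S ->
    forall y, Z y <-> exists z, Z z /\ act X pi z = y.

Definition fun_supports (A : Type) (X Y : invset A) (X1 : X -> Prop)
  (Y1 : Y -> Prop) (S : list A) (f : X -> Y) : Prop :=
  forall pi, fixes pi S -> forall x, X1 x ->
    X1 (act X pi x) /\ Y1 (act Y pi (f x)) /\ f (act X pi x) = act Y pi (f x).

Definition least_supp (A : Type) (P : list A -> Prop) (S : list A) : Prop :=
  P S /\ forall T, P T -> incl S T.
Arguments set_supports {A X} S Z.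
Arguments fun_supports {A X Y} X1 Y1 S f.

(* Main.v *)
Require Import Defs.
From Stdlib Require Import List Classical ClassicalEpsilon.
Import ListNotations.
Set Implicit Arguments.

Definition dec (P : Prop) : {P} + {~P} := excluded_middle_informative P.

Section Perm.
Variable A : Type.

Definition swapf (a b c : A) : A :=
  if dec (c = a) then b else if dec (c = b) then a else c.

Lemma swapf_a a b : swapf a b a = b.
Proof. unfold swapf. destruct (dec (a = a)); congruence. Qed.
Lemma swapf_b a b : swapf a b b = a.
Proof. unfold swapf. destruct (dec (b = a)); [congruence|].
  destruct (dec (b = b)); congruence. Qed.
Lemma swapf_o a b c : c <> a -> c <> b -> swapf a b c = c.
Proof. intros. unfold swapf. destruct (dec (c = a)); [congruence|].
  destruct (dec (c = b)); congruence. Qed.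

Lemma swapf_inv a b c : swapf a b (swapf a b c) = c.
Proof.
  destruct (dec (c = a)) as [->|Ha]. rewrite swapf_a, swapf_b; auto.
  destruct (dec (c = b)) as [->|Hb]. rewrite swapf_b, swapf_a; auto.
  rewrite (swapf_o Ha Hb). apply swapf_o; auto.
Qed.

Lemma swapf_spec a b c : swapf a b c <> c -> In c [a; b].
Proof.
  intros H. destruct (dec (c = a)) as [->|Ha]. left; auto.
  destruct (dec (c = b)) as [->|Hb]. right; left; auto.
  rewrite swapf_o in H; congruence.
Qed.

Definition swap (a b : A) : fperm A :=
  FPerm (swapf a b) (swapf a b) (swapf_inv a b) (swapf_inv a b) [a; b] (swapf_spec a b).

Lemma fcomp_spec (p q : fperm A) c :
  pf p (pf q c) <> c -> In c (pdom p ++ pdom q).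
Proof.
  intros H. apply in_or_app. destruct (dec (pf q c = c)) as [E|E].
  - left. apply pdom_spec. rewrite E in H. exact H.
  - right. apply pdom_spec. exact E.
Qed.

Lemma fcomp_l (p q : fperm A) c : pf p (pf q (pinv q (pinv p c))) = c.
Proof. rewrite pf_pinv, pf_pinv. reflexivity. Qed.
Lemma fcomp_r (p q : fperm A) c : pinv q (pinv p (pf p (pf q c))) = c.
Proof. rewrite pinv_pf, pinv_pf. reflexivity. Qed.

Definition fcomp (p q : fperm A) : fperm A :=
  FPerm (fun c => pf p (pf q c)) (fun c => pinv q (pinv p c))
    (fcomp_l p q) (fcomp_r p q) (pdom p ++ pdom q) (fcomp_spec p q).

Lemma finv_spec (p : fperm A) c : pinv p c <> c -> In c (pdom p).
Proof.
  intros H. apply pdom_spec. intro e. apply H.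
  rewrite <- e at 1. apply pinv_pf.
Qed.

Definition finv (p : fperm A) : fperm A :=
  FPerm (pinv p) (pf p) (pinv_pf p) (pf_pinv p) (pdom p) (finv_spec p).

Lemma fid_spec c : (fun x : A => x) c <> c -> In c [].
Proof. intros H; exfalso; apply H; reflexivity. Qed.

Definition fid : fperm A :=
  FPerm (fun x => x) (fun x => x) (fun _ => eq_refl) (fun _ => eq_refl) [] fid_spec.

Lemma finv_fixes (p : fperm A) S : fixes p S -> fixes (finv p) S.
Proof.
  intros H s Hs. simpl. rewrite <- (H s Hs) at 1. apply pinv_pf.
Qed.

Lemma act_ext (X : invset A) (p q : fperm A) x :
  (forall c, pf p c = pf q c) -> act X p x = act X q x.
Proof.
  intros E. rewrite (act_comp X q fid p x).
  - rewrite (act_id X fid x); auto.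
  - intros a. simpl. apply E.
Qed.

Lemma act_fcomp (X : invset A) (p q : fperm A) x :
  act X (fcomp p q) x = act X p (act X q x).
Proof. apply act_comp. intros; reflexivity. Qed.

Lemma act_inv (X : invset A) (p : fperm A) x :
  act X (finv p) (act X p x) = x.
Proof.
  rewrite <- (act_comp X (finv p) p fid x).
  - apply act_id. reflexivity.
  - intros a. simpl. symmetry. apply pinv_pf.
Qed.

Lemma fixes_incl (p : fperm A) S T : incl S T -> fixes p T -> fixes p S.
Proof. intros I H a Ha. apply H, I, Ha. Qed.

End Perm.

Section Supp.
Variable A : Type.
Hypothesis A_infinite : forall l : list A, exists a, ~ In a l.
Variables (B C : invset A) (B1 : B -> Prop) (C1 : C -> Prop) (h : B -> C).

Definition good (pi : fperm A) := forall x, B1 x ->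
  B1 (act B pi x) /\ C1 (act C pi (h x)) /\ h (act B pi x) = act C pi (h x).

Lemma good_comp p q : good p -> good q -> good (fcomp p q).
Proof.
  intros Hp Hq x Hx. rewrite !act_fcomp.
  destruct (Hq x Hx) as [H1 [H2 H3]].
  destruct (Hp _ H1) as [H4 [H5 H6]].
  rewrite H3 in H5, H6. auto.
Qed.

Lemma good_ext p q : (forall c, pf p c = pf q c) -> good p -> good q.
Proof.
  intros E Hp x Hx. rewrite <- !(act_ext _ p q) by auto. auto.
Qed.

Lemma supp_remove S T S' a :
  fun_supports B1 C1 S h -> fun_supports B1 C1 T h -> ~ In a T ->
  incl S (a :: S') -> fun_supports B1 C1 S' h.
Proof.
  intros HS HT Ha Hinc pi Hpi.
  unfold fun_supports in HS, HT. change (good pi).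
  destruct (A_infinite (S ++ T ++ pdom pi)) as [b Hb].
  rewrite !in_app_iff in Hb.
  assert (Hpb : pf pi b = b).
  { destruct (dec (pf pi b = b)) as [E|E]; auto.
    exfalso; apply Hb; right; right; apply pdom_spec; exact E. }
  assert (Gt : good (swap a b)).
  { unfold good; apply HT. intros c Hc. simpl. apply swapf_o; intro; subst; tauto. }
  assert (Gp : good (fcomp (swap a b) (fcomp pi (swap a b)))).
  { unfold good; apply HS. intros c Hc. simpl.
    destruct (dec (c = a)) as [->|Hca].
    - rewrite swapf_a, Hpb, swapf_b. reflexivity.
    - assert (Hcb : c <> b) by (intro; subst; tauto).
      destruct (Hinc c Hc) as [E|E]; [congruence|].
      rewrite (swapf_o Hca Hcb), (Hpi c E). apply swapf_o; auto. }
  apply good_ext with (p := fcomp (swap a b) (fcomp (fcomp (swap a b) (fcomp pi (swap a b))) (swap a b))).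
  - intros c. simpl. rewrite !swapf_inv. reflexivity.
  - apply good_comp; auto. apply good_comp; auto.
Qed.

Definition leastP (a : A) := forall T, fun_supports B1 C1 T h -> In a T.

Lemma supp_filter L : forall K, fun_supports B1 C1 (K ++ L) h ->
  fun_supports B1 C1 (K ++ filter (fun a => if dec (leastP a) then true else false) L) h.
Proof.
  induction L as [|a L IH]; intros K H; simpl; auto.
  destruct (dec (leastP a)) as [Pa|nPa].
  - replace (K ++ a :: _) with ((K ++ [a]) ++ filter (fun a => if dec (leastP a) then true else false) L)
      by (rewrite <- app_assoc; reflexivity).
    apply IH. rewrite <- app_assoc. exact H.
  - apply IH. unfold leastP in nPa.
    apply not_all_ex_not in nPa. destruct nPa as [T HT].
    apply imply_to_and in HT. destruct HT as [HT1 HT2].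
    apply (@supp_remove (K ++ a :: L) T (K ++ L) a); auto.
    intros c Hc. rewrite in_app_iff in Hc. simpl in *. rewrite in_app_iff. tauto.
Qed.

Lemma least_exists S0 : fun_supports B1 C1 S0 h ->
  exists Sh, least_supp (fun S => fun_supports B1 C1 S h) Sh /\ incl Sh S0.
Proof.
  intros H.
  exists (filter (fun a => if dec (leastP a) then true else false) S0).
  split; [split|].
  - apply (supp_filter S0 []). exact H.
  - intros T HT a Ha. apply filter_In in Ha. destruct Ha as [_ Ha].
    destruct (dec (leastP a)) as [P|P]; [|discriminate]. apply P, HT.
  - intros a Ha. apply filter_In in Ha. tauto.
Qed.

End Supp.

Section SB.
Variable A : Type.
Variables (B C : invset A) (B1 : B -> Prop) (C1 : C -> Prop) (f : B -> C) (g : C -> B).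
Hypothesis f_maps : forall x, B1 x -> C1 (f x).
Hypothesis f_inj : forall x y, B1 x -> B1 y -> f x = f y -> x = y.
Hypothesis g_maps : forall y, C1 y -> B1 (g y).
Hypothesis g_inj : forall x y, C1 x -> C1 y -> g x = g y -> x = y.

Fixpoint it (n : nat) (x : B) : B :=
  match n with 0 => x | S n => g (f (it n x)) end.

Definition img (x : B) := exists y, C1 y /\ g y = x.

Definition X0 (x : B) := exists n x0, B1 x0 /\ ~ img x0 /\ x = it n x0.

Definition hh (x : B) : C :=
  if dec (X0 x) then f x else
  match dec (img x) with
  | left e => proj1_sig (constructive_indefinite_description _ e)
  | right _ => f x end.

Lemma it_B1 n x : B1 x -> B1 (it n x).
Proof. induction n; simpl; auto. Qed.

Lemma hh_X0 x : X0 x -> hh x = f x.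
Proof. intros H. unfold hh. destruct (dec (X0 x)); tauto. Qed.

Lemma hh_notX0 x y : ~ X0 x -> C1 y -> g y = x -> hh x = y.
Proof.
  intros H Hy Hg. unfold hh. destruct (dec (X0 x)); [contradiction|].
  destruct (dec (img x)) as [e|ne].
  - destruct (constructive_indefinite_description _ e) as [y' [Hy' Hg']]; simpl.
    apply g_inj; congruence.
  - exfalso; apply ne; exists y; auto.
Qed.

Lemma notX0_img x : B1 x -> ~ X0 x -> img x.
Proof.
  intros Hx H. destruct (classic (img x)) as [I|I]; auto.
  exfalso; apply H; exists 0, x; auto.
Qed.

Lemma hh_maps x : B1 x -> C1 (hh x).
Proof.
  intros Hx. destruct (classic (X0 x)) as [X|X].
  - rewrite hh_X0; auto.
  - destruct (notX0_img Hx X) as [y [Hy Hg]]. rewrite (hh_notX0 X Hy Hg). auto.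
Qed.

Lemma hh_inj x y : B1 x -> B1 y -> hh x = hh y -> x = y.
Proof.
  intros Hx Hy E.
  assert (mixed : forall u v, B1 u -> B1 v -> X0 u -> ~ X0 v -> hh u = hh v -> False).
  { intros u v Hu Hv Xu Xv E'.
    destruct (notX0_img Hv Xv) as [w [Hw Hg]].
    rewrite hh_X0, (hh_notX0 Xv Hw Hg) in E' by auto.
    apply Xv. destruct Xu as [n [x0 [H1 [H2 H3]]]].
    exists (S n), x0. split; auto. split; auto. simpl. rewrite <- H3, E'. auto. }
  destruct (classic (X0 x)) as [X|X]; destruct (classic (X0 y)) as [Y|Y].
  - rewrite !hh_X0 in E by auto. auto.
  - exfalso; eauto.
  - exfalso; eauto.
  - destruct (notX0_img Hx X) as [u [Hu Hgu]].
    destruct (notX0_img Hy Y) as [v [Hv Hgv]].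
    rewrite (hh_notX0 X Hu Hgu), (hh_notX0 Y Hv Hgv) in E. congruence.
Qed.

Lemma hh_surj y : C1 y -> exists x, B1 x /\ hh x = y.
Proof.
  intros Hy. destruct (classic (X0 (g y))) as [X|X].
  - destruct X as [n [x0 [H1 [H2 H3]]]]. destruct n as [|m].
    + exfalso; apply H2; exists y; auto.
    + simpl in H3. assert (Hm : B1 (it m x0)) by (apply it_B1; auto).
      assert (y = f (it m x0)) by (apply g_inj; auto).
      exists (it m x0). split; auto. rewrite hh_X0; auto.
      exists m, x0; auto.
  - exists (g y). split; auto. apply hh_notX0; auto.
Qed.

Section Act.
Variables (S0 : list A).
Hypothesis f_fs : fun_supports B1 C1 S0 f.
Hypothesis g_fs : fun_supports C1 B1 S0 g.

Lemma it_act pi n x : fixes pi S0 -> B1 x -> it n (act B pi x) = act B pi (it n x).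
Proof.
  intros Hpi Hx. induction n; simpl; auto.
  rewrite IHn.
  assert (H1 : B1 (it n x)) by (apply it_B1; auto).
  destruct (f_fs Hpi H1) as [_ [_ E1]]. rewrite E1.
  destruct (g_fs Hpi (f_maps H1)) as [_ [_ E2]]. exact E2.
Qed.

Lemma img_act pi x : fixes pi S0 -> B1 x -> img (act B pi x) -> img x.
Proof.
  intros Hpi Hx [y [Hy Hg]].
  assert (Hpi' := finv_fixes Hpi).
  destruct (g_fs Hpi' Hy) as [H1 [_ H3]].
  exists (act C (finv pi) y). split; auto.
  rewrite H3, Hg. apply act_inv.
Qed.

Lemma X0_act pi x : fixes pi S0 -> X0 x -> X0 (act B pi x).
Proof.
  intros Hpi [n [x0 [H1 [H2 H3]]]].
  exists n, (act B pi x0). split; [|split].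
  - destruct (f_fs Hpi H1); tauto.
  - intro I. apply H2. apply (img_act Hpi H1 I).
  - rewrite it_act; auto. congruence.
Qed.

Lemma hh_fs : fun_supports B1 C1 S0 hh.
Proof.
  intros pi Hpi x Hx.
  destruct (f_fs Hpi Hx) as [H1 [H2 H3]].
  split; auto.
  destruct (classic (X0 x)) as [X|X].
  - rewrite !hh_X0; auto. apply X0_act; auto.
  - destruct (notX0_img Hx X) as [y [Hy Hg]].
    rewrite (hh_notX0 X Hy Hg).
    destruct (g_fs Hpi Hy) as [G1 [G2 G3]].
    split; auto.
    apply hh_notX0; auto.
    + intro Y. apply X. rewrite <- (act_inv B pi x).
      apply X0_act; auto. apply finv_fixes; auto.
    + congruence.
Qed.
End Act.
End SB.

Lemma fs_mono (A : Type) (X Y : invset A) (X1 : X -> Prop) (Y1 : Y -> Prop) S T (k : X -> Y) :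
  incl S T -> fun_supports X1 Y1 S k -> fun_supports X1 Y1 T k.
Proof. intros I H pi Hpi. apply H. intros a Ha. apply Hpi, I, Ha. Qed.


Theorem mainTheorem1
  (A : Type) (A_infinite : forall l : list A, exists a, ~ In a l)
  (B C : invset A) (B1 : B -> Prop) (C1 : C -> Prop)
  (HB1 : exists S, set_supports S B1) (HC1 : exists S, set_supports S C1)
  (f : B -> C) (g : C -> B)
  (f_maps : forall x, B1 x -> C1 (f x))
  (f_inj : forall x y, B1 x -> B1 y -> f x = f y -> x = y)
  (f_fs : exists S, fun_supports B1 C1 S f)
  (g_maps : forall y, C1 y -> B1 (g y))
  (g_inj : forall x y, C1 x -> C1 y -> g x = g y -> x = y)
  (g_fs : exists S, fun_supports C1 B1 S g) :
  exists h : B -> C,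
    (forall x, B1 x -> C1 (h x)) /\
    (forall x y, B1 x -> B1 y -> h x = h y -> x = y) /\
    (forall y, C1 y -> exists x, B1 x /\ h x = y) /\
    (exists S, fun_supports B1 C1 S h) /\
    (forall Sf Sg SB SC,
       least_supp (fun S => fun_supports B1 C1 S f) Sf ->
       least_supp (fun S => fun_supports C1 B1 S g) Sg ->
       least_supp (fun S => set_supports S B1) SB ->
       least_supp (fun S => set_supports S C1) SC ->
       exists Sh, least_supp (fun S => fun_supports B1 C1 S h) Sh /\
                  incl Sh (Sf ++ Sg ++ SB ++ SC)).
Proof.
  exists (hh B C B1 C1 f g).
  split; [|split; [|split; [|split]]].
  - apply hh_maps; auto.
  - apply hh_inj; auto.
  - apply hh_surj; auto.
  - destruct f_fs as [Sf Hf]. destruct g_fs as [Sg Hg].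
    exists (Sf ++ Sg). apply hh_fs; auto.
    + apply (fs_mono (S := Sf)); auto. intros a Ha; apply in_or_app; auto.
    + apply (fs_mono (S := Sg)); auto. intros a Ha; apply in_or_app; auto.
  - intros Sf Sg SB SC [Hf _] [Hg _] _ _.
    destruct (@least_exists A A_infinite B C B1 C1 (hh B C B1 C1 f g) (Sf ++ Sg ++ SB ++ SC))
      as [Sh [H1 H2]].
    + apply hh_fs; auto.
      * apply (fs_mono (S := Sf)); auto. intros a Ha; apply in_or_app; auto.
      * apply (fs_mono (S := Sg)); auto. intros a Ha; rewrite !in_app_iff; auto.
    + exists Sh; auto.
Qed.
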